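(* Fix $m<n$. The triples of statistics $(\mathrm{Rec},\mathrm{psa},\mathrm{wait})$ on the set of ordered $(m,n)$-forests and $(\mathrm{Rec},\mathrm{lucky},\mathrm{probes})$ on the set of $(m,n)$-parking functions are jointly equidistributed: for every set $R$ and integers $a,b$, the number of ordered $(m,n)$-forests $F$ with $(\mathrm{Rec}(F),\mathrm{psa}(F),\mathrm{wait}(F))=(R,a,b)$ equals the number of $(m,n)$-parking functions $\pi$ with $(\mathrm{Rec}(\pi),\mathrm{lucky}(\pi),\mathrm{probes}(\pi))=(R,a,b)$.
   Context: $[n]=\{1,\dots,n\}$, $[n]_0=\{0,\dots,n\}$. Ordered forests: an ordered $(m,n)$-forest is a rooted forest with $n+1$ nodes and $m$ edges whose component trees $T_0,\dots,T_{n-m}$ are totally ordered, with roots unlabeled and marked $\circ,\circ_1,\dots,\circ_{n-m}$, and with its $m$ non-root vertices labeled bijectively by $[m]$. Priority search on $F$: initially only the children of $\circ$ are unblocked; at each step one visits the unblocked unvisited node with the smallest label and unblocks its children; when all nodes of a tree have been visited, one moves to the next tree, visits its root and unblocks the root's children. Steps are numbered $1,\dots,n$, with $\circ$ considered visited at step $0$. The priority traversal of $F$ is the word whose $i$-th letter is the label of the node visited at step $i$, or $-$ if that node is a root. A forest record of $F$ is a non-root node whose label is the largest label among the non-root nodes on the path from its root to it; $\mathrm{Rec}(F)$ is the set of forest records. A non-root vertex is a priority small ascent if it is visited at the step immediately after its parent; $\mathrm{psa}(F)$ is their number. The waiting time of a non-root vertex visited at step $b$ whose parent was visited at step $a$ is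 $b-a$ (the number of steps during which it is unblocked, counting the step at which it is visited); $\mathrm{wait}(F)$ is the sum of waiting times over all non-root vertices. Partial parking functions: an $(m,n)$-parking function is a map $\pi:[m]\to[n]$ such that when cars $1,\dots,m$ arrive in order to spots $1,\dots,n$ and car $i$ parks in the first empty spot $\ge\pi(i)$, all cars park. Its bird's eye permutation is the word $\omega(1)\cdots\omega(n)$ where $\omega(s)$ is the car parked at spot $s$, or $-$ if spot $s$ is empty. A record of a word in $[m]\cup\{-\}$ is a left-to-right maximum of one of its maximal subwords not containing $-$; $\mathrm{Rec}(\pi)$ is the set of records of the bird's eye permutation of $\pi$. A car is lucky if it parks at its preferred spot; $\mathrm{lucky}(\pi)$ is the number of lucky cars. $\mathrm{probes}(\pi)$ is the total number of parking attempts (successful or not) of all cars, where car $i$ parking at spot $s$ makes $s-\pi(i)+1$ attempts. *)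

(* Defs.v *)
From mathcomp Require Import all_boot.
Set Implicit Arguments. Unset Strict Implicit. Unset Printing Implicit Defensive.

(* Conventions: the label j+1 of [m] is represented by j : 'I_m; the spot s+1
   of [n] by s : 'I_n (or the nat s); car j+1 by j. *)

(* Nodes: roots inl r (r : 'I_(n-m).+1, r = 0 is the
   root "o", r = j is "o_j") and non-root vertices inr v (v : 'I_m).
   A forest is given by the parent function of its non-root vertices.      *)
Definition node (m n : nat) := ('I_(n - m).+1 + 'I_m)%type.
Definition forestfun (m n : nat) := {ffun 'I_m -> node m n}.

Definition parent m n (F : forestfun m n) (x : node m n) : node m n :=
  match x with inl r => inl r | inr v => F v end.

Definition is_root m n (x : node m n) : bool :=
  if x is inl _ then true else false.

Definition is_forest m n (F : forestfun m n) : bool :=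
  [forall v : 'I_m, is_root (iter m (parent F) (inr v))].

(* Priority search: given the sequence of visited nodes, the next visited
   node is the unvisited non-root vertex of smallest label whose parent is
   visited (= unblocked), or, if there is none, the next root. *)
Definition next_node m n (F : forestfun m n) (vis : seq (node m n)) : node m n :=
  match [seq v <- enum 'I_m | (inr v \notin vis) && (parent F (inr v) \in vis)] with
  | v :: _ => inr v
  | [::] => inl (inord (count (@is_root m n) vis))
  end.

Definition search m n (F : forestfun m n) : seq (node m n) :=
  iter n (fun vis => rcons vis (next_node F vis)) [:: inl ord0].

Definition step m n (F : forestfun m n) (x : node m n) : nat := index x (search F).

Definition forest_rec m n (F : forestfun m n) : {set 'I_m} :=
  [set v : 'I_m | [forall k : 'I_m.+1, (0 < k) ==>
      match iter k (parent F) (inr v) with inr u => u < v | inl _ => true end]].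

Definition psa m n (F : forestfun m n) : nat :=
  #|[set v : 'I_m | step F (inr v) == (step F (parent F (inr v))).+1]|.

Definition wait m n (F : forestfun m n) : nat :=
  \sum_(v < m) (step F (inr v) - step F (parent F (inr v))).

(* Partial parking functions.  park n prefs = Some spots where spots is the
   list of spots (0-based) where cars 1,2,... park, or None if some car fails. *)
Definition park (n : nat) (prefs : seq nat) : option (seq nat) :=
  foldl (fun o p => if o is Some occ then
           (if [seq s <- iota p (n - p) | s \notin occ] is s :: _
            then Some (rcons occ s) else None)
         else None) (Some [::]) prefs.

Definition prefs m n (pi : {ffun 'I_m -> 'I_n}) : seq nat :=
  [seq val (pi i) | i <- enum 'I_m].

Definition is_pf m n (pi : {ffun 'I_m -> 'I_n}) : bool :=
  park n (prefs pi) != None.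

Definition spots m n (pi : {ffun 'I_m -> 'I_n}) : seq nat :=
  odflt [::] (park n (prefs pi)).

Definition spot m n (pi : {ffun 'I_m -> 'I_n}) (i : 'I_m) : nat :=
  nth 0 (spots pi) i.

(* car j is a record of the bird's eye word: every car parked to its left in
   the same maximal block of occupied spots has a smaller number. The car
   parked at spot t is index t (spots pi). *)
Definition pf_rec m n (pi : {ffun 'I_m -> 'I_n}) : {set 'I_m} :=
  [set i : 'I_m | [forall t : 'I_n,
     ((t < spot pi i) && all (fun s => s \in spots pi) (iota t (spot pi i - t)))
       ==> (index (val t) (spots pi) < i)]].

Definition lucky m n (pi : {ffun 'I_m -> 'I_n}) : nat :=
  #|[set i : 'I_m | spot pi i == pi i]|.

Definition probes m n (pi : {ffun 'I_m -> 'I_n}) : nat :=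
  \sum_(i < m) (spot pi i - pi i).+1.

(* Main.v *)
Require Import Defs.
From mathcomp Require Import all_boot zify.
Set Implicit Arguments. Unset Strict Implicit. Unset Printing Implicit Defensive.

Lemma filter_iota_head (P : pred nat) a k y l :
  filter P (iota a k) = y :: l ->
  [/\ a <= y < a + k, P y & forall s, a <= s < y -> ~~ P s].
Proof.
elim: k a l => [|k IH] a l //=.
case: ifP => Pa.
  case=> <- _; split => //; first lia.
  move=> s; lia.
move=> /IH [h1 h2 h3]; split => //; first lia.
move=> s hs; case: (ltnP a s) => h; first by apply: h3; lia.
have -> : s = a by lia. by rewrite Pa.
Qed.

Lemma filter_iota_headE (P : pred nat) a k y :
  a <= y < a + k -> P y -> (forall s, a <= s < y -> ~~ P s) ->
  exists l, filter P (iota a k) = y :: l.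
Proof.
elim: k a => [|k IH] a; first lia.
move=> hy Py hs /=.
case: ifP => Pa.
  have -> : y = a.
    case: (ltnP a y) => h; last lia.
    by move: (hs a); rewrite Pa; lia.
  by eexists.
apply: IH => //.
have : a != y by apply/eqP => e; rewrite e Py in Pa.
lia.
move=> s h; apply: hs; lia.
Qed.

Definition good n (p occ : seq nat) :=
  size occ = size p /\ forall i, i < size p ->
   [/\ nth 0 p i <= nth 0 occ i < n, nth 0 occ i \notin take i occ &
       forall s, nth 0 p i <= s < nth 0 occ i -> s \in take i occ].

Lemma take_rcons' (T : Type) i (s : seq T) x : i <= size s -> take i (rcons s x) = take i s.
Proof. by move=> h; rewrite -cats1 takel_cat. Qed.

Lemma park_good n p occ : park n p = Some occ <-> good n p occ.
Proof.
elim/last_ind: p occ => [|p x IH] occ.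
  rewrite /park /=; split; first by case=> <-; split.
  by case=> /size0nil -> _.
rewrite /park foldl_rcons -/(park n p).
split.
  case Ep: (park n p) => [o'|] //.
  case Ef: [seq s <- iota x (n - x) | s \notin o'] => [|y l] // [<-].
  have [so' G'] := (IH o').1 Ep.
  have [h1 h2 h3] := filter_iota_head Ef.
  split; first by rewrite !size_rcons so'.
  move=> i; rewrite size_rcons ltnS leq_eqVlt => /orP [/eqP ->|hi].
    rewrite !nth_rcons so' ltnn eqxx -so' take_rcons' // take_size.
    split => //; first lia.
    by move=> s /h3; rewrite negbK.
  have [g1 g2 g3] := G' i hi.
  rewrite !nth_rcons so' hi take_rcons' ?so'; last lia.
  by split.
case; case/lastP: occ => [|o' y]; first by rewrite size_rcons.
rewrite !size_rcons => /eqP; rewrite eqSS => /eqP so G.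
have G' : good n p o'.
  split => // i hi.
  have := G i; rewrite ltnS ltnW // => /(_ isT).
  by rewrite !nth_rcons hi so hi take_rcons' ?so; last lia.
have -> := (IH o').2 G'.
have := G (size p); rewrite ltnSn => /(_ isT).
rewrite !nth_rcons ltnn eqxx so ltnn eqxx -so take_rcons' // take_size.
case=> h1 h2 h3.
have [l ->] := @filter_iota_headE (fun s => s \notin o') x (n - x) y ltac:(lia) h2
  (fun s hs => ltac:(by rewrite negbK; apply: h3)).
by [].
Qed.

Lemma nth_map_enum m (f : 'I_m -> nat) (i : 'I_m) :
  nth 0 [seq f j | j <- enum 'I_m] i = f i.
Proof. by rewrite (nth_map i) ?size_enum_ord ?ltn_ord // nth_ord_enum. Qed.

Lemma size_map_enum m (f : 'I_m -> nat) : size [seq f j | j <- enum 'I_m] = m.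
Proof. by rewrite size_map size_enum_ord. Qed.

Lemma mem_take_map_enum m (f : 'I_m -> nat) i s :
  (s \in take i [seq f j | j <- enum 'I_m]) = [exists j : 'I_m, (j < i) && (f j == s)].
Proof.
rewrite -map_take; apply/mapP/existsP.
  case=> j; rewrite in_take ?mem_enum // index_enum_ord => hj ->.
  by exists j; rewrite hj eqxx.
case=> j /andP [hj /eqP <-]; exists j => //.
by rewrite in_take ?mem_enum // index_enum_ord.
Qed.

Lemma sorted_enum_ord m : sorted (fun i j : 'I_m => i < j) (enum 'I_m).
Proof.
have := iota_ltn_sorted 0 m; rewrite -val_enum_ord sorted_map.
by apply: sub_sorted.
Qed.

Lemma head_filter_enum m (P : pred 'I_m) u l v :
  filter P (enum 'I_m) = u :: l -> P v -> u <= v.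
Proof.
move=> E Pv.
have : v \in filter P (enum 'I_m) by rewrite mem_filter Pv mem_enum.
have tr : transitive (fun i j : 'I_m => i < j).
  by move=> x y z; apply: ltn_trans.
have := sorted_filter tr P (sorted_enum_ord m); rewrite E /= => hp.
rewrite inE => /orP [/eqP -> //|hv].
by have := order_path_min tr hp => /allP /(_ v hv) /ltnW.
Qed.

Section PF.
Variables (m n : nat) (pi : {ffun 'I_m -> 'I_n}).
Hypothesis hpf : is_pf pi.

Lemma prefsE : prefs pi = [seq (val (pi j)) | j <- enum 'I_m].
Proof. by []. Qed.

Lemma park_spots : park n (prefs pi) = Some (spots pi).
Proof. by move: hpf; rewrite /is_pf /spots; case: park. Qed.

Lemma good_spots : good n (prefs pi) (spots pi).
Proof. exact: (park_good _ _ _).1 park_spots. Qed.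

Lemma size_spots : size (spots pi) = m.
Proof. by case: good_spots => ->; rewrite size_map size_enum_ord. Qed.

Lemma spotsE : spots pi = [seq spot pi j | j <- enum 'I_m].
Proof.
apply: (eq_from_nth (x0 := 0)); first by rewrite size_spots size_map_enum.
move=> i; rewrite size_spots => hi.
by rewrite -[i]/(val (Ordinal hi)) nth_map_enum.
Qed.

Lemma spot_facts (i : 'I_m) :
  [/\ pi i <= spot pi i < n,
      forall j : 'I_m, j < i -> spot pi j != spot pi i &
      forall s, pi i <= s < spot pi i -> exists2 j : 'I_m, j < i & spot pi j = s].
Proof.
have [_ G] := good_spots.
have := G i; rewrite size_map size_enum_ord ltn_ord => /(_ isT).
rewrite nth_map_enum -/(spot pi i) => -[h1 h2 h3]; split => //.
  move=> j hj; apply/eqP => e; move: h2; rewrite spotsE mem_take_map_enum.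
  by move/existsP; apply; exists j; rewrite hj e eqxx.
move=> s /h3; rewrite spotsE mem_take_map_enum => /existsP [j /andP [hj /eqP e]].
by exists j.
Qed.

Lemma spot_inj : injective (spot pi).
Proof.
move=> i j e; apply/eqP; case: (ltngtP i j) => h.
- by have [_ /(_ i h) ] := spot_facts j; rewrite e eqxx.
- by have [_ /(_ j h) ] := spot_facts i; rewrite e eqxx.
- by apply/eqP/val_inj.
Qed.

End PF.

Lemma eq_inl m n (a b : 'I_(n - m).+1) : (inl a == inl b :> node m n) = (a == b).
Proof. by apply/eqP/eqP => [[]|->]. Qed.
Lemma eq_inr m n (a b : 'I_m) : (inr a == inr b :> node m n) = (a == b).
Proof. by apply/eqP/eqP => [[]|->]. Qed.

Lemma card_node m n : m < n -> #|{: node m n}| = n.+1.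
Proof. by move=> h; rewrite card_sum !card_ord; lia. Qed.

Definition cand m n (F : forestfun m n) (vis : seq (node m n)) :=
  [seq v <- enum 'I_m | (inr v \notin vis) && (parent F (inr v) \in vis)].

Definition Sk m n (F : forestfun m n) k :=
  iter k (fun vis => rcons vis (next_node F vis)) [:: inl ord0].

Lemma Sk_S m n (F : forestfun m n) k : Sk F k.+1 = rcons (Sk F k) (next_node F (Sk F k)).
Proof. by []. Qed.

Lemma size_Sk m n (F : forestfun m n) k : size (Sk F k) = k.+1.
Proof. by elim: k => // k IH; rewrite Sk_S size_rcons IH. Qed.

Lemma Sk_prefix m n (F : forestfun m n) k d : take k.+1 (Sk F (d + k)) = Sk F k.
Proof.
elim: d => [|d IH]; first by rewrite add0n take_oversize // size_Sk.
by rewrite addSn Sk_S take_rcons' // size_Sk; lia.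
Qed.

Lemma Sk_take m n (F : forestfun m n) k : k <= n -> Sk F k = take k.+1 (search F).
Proof. by move=> h; rewrite /search -(Sk_prefix F k (n - k)) subnK. Qed.

Definition inv m n (vis : seq (node m n)) :=
  [/\ uniq vis, count (@is_root m n) vis <= (n - m).+1 &
      forall r : 'I_(n - m).+1, (inl r \in vis) = (r < count (@is_root m n) vis)].

Section Forest.
Variables (m n : nat) (F : forestfun m n).
Hypotheses (hmn : m < n) (hF : is_forest F).

Lemma inv_Sk k : k <= n -> inv (Sk F k).
Proof.
elim: k => [_|k IH hk].
  split => //= r; rewrite inE eq_inl; apply/eqP/idP => [->//|]; rewrite ltnS leqn0 => /eqP h.
  by apply/val_inj.
have [U C M] := IH (ltnW hk).
rewrite Sk_S; set vis := Sk F k.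
rewrite /next_node -/(cand F vis).
case E: (cand F vis) => [|v l].
  set c := count (@is_root m n) vis.
  have hc : c < (n - m).+1.
    rewrite ltn_neqAle C andbT; apply/eqP => ec.
    have allr : forall r : 'I_(n - m).+1, inl r \in vis by move=> r; rewrite M -/c ec ltn_ord.
    have [x xn] : exists x, x \notin vis.
      apply/existsP; rewrite -negb_forall; apply/negP => /forallP allin.
      have := uniq_leq_size (enum_uniq {: node m n}) (s2 := vis).
      rewrite -cardE card_node // size_Sk => /(_ (fun x _ => allin x)); lia.
    case: x xn => [r|v]; first by rewrite allr.
    move=> vn.
    have := forallP hF v => hroot.
    have ex : exists j, iter j (parent F) (inr v) \in vis.
      exists m; case: (iter m (parent F) (inr v)) hroot => // r _; exact: allr.
    case: (ex_minnP ex) => j0 Pj0 minj.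
    case: j0 Pj0 minj => [|j] Pj minj; first by rewrite /= (negbTE vn) in Pj.
    have ynot : iter j (parent F) (inr v) \notin vis.
      by apply/negP => /minj; rewrite ltnn.
    move: Pj ynot; rewrite iterS.
    case: (iter j (parent F) (inr v)) => [r|w]; first by rewrite allr.
    move=> Pw wn.
    have : w \in cand F vis by rewrite mem_filter wn Pw mem_enum.
    by rewrite E.
  have cv : (inord c : 'I_(n - m).+1) = c :> nat by rewrite inordK.
  have cnt : count (@is_root m n) (rcons vis (inl (inord c))) = c.+1.
    by rewrite -cats1 count_cat /= addn0 addn1.
  split.
  - by rewrite rcons_uniq U andbT M cv ltnn.
  - by rewrite cnt.
  - move=> r; rewrite mem_rcons inE eq_inl M -/c cnt -val_eqE /= cv ltnS (leq_eqVlt r).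
    by rewrite orbC.
have : v \in cand F vis by rewrite E mem_head.
rewrite mem_filter => /andP [/andP [vn _] _].
have cnt : count (@is_root m n) (rcons vis (inr v)) = count (@is_root m n) vis.
  by rewrite -cats1 count_cat /= !addn0.
split.
- by rewrite rcons_uniq U vn.
- by rewrite cnt.
- by move=> r; rewrite mem_rcons inE cnt -M.
Qed.

Local Notation s := (search F).
Local Notation x0 := (inl ord0 : node m n).

Lemma size_search : size s = n.+1.
Proof. by rewrite /search -/(Sk F n) size_Sk. Qed.

Lemma uniq_search : uniq s.
Proof. by have [] := inv_Sk (leqnn n). Qed.

Lemma mem_search x : x \in s.
Proof.
apply/negPn/negP => xn.
have := uniq_leq_size (s1 := x :: s) (s2 := enum {: node m n}).
rewrite /= xn uniq_search -cardE card_node // size_search => /(_ isT).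
by move=> /(_ (fun y _ => mem_enum _ y)); rewrite ltnn.
Qed.

Lemma step_le x : step F x <= n.
Proof. by rewrite -ltnS -size_search /step index_mem mem_search. Qed.

Lemma nth_step x : nth x0 s (step F x) = x.
Proof. exact: nth_index (mem_search x). Qed.

Lemma step_nth t : t <= n -> step F (nth x0 s t) = t.
Proof. by move=> h; rewrite /step index_uniq ?size_search ?uniq_search. Qed.

Lemma step_inj x y : step F x = step F y -> x = y.
Proof. by move=> e; rewrite -(nth_step x) e nth_step. Qed.

Lemma mem_Sk k x : k <= n -> (x \in Sk F k) = (step F x <= k).
Proof. by move=> h; rewrite Sk_take // in_take ?mem_search. Qed.

Lemma nth_Sk t : 0 < t <= n -> nth x0 s t = next_node F (Sk F t.-1).
Proof.
case: t => // t /= h.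
have := Sk_take F h; rewrite Sk_S => e.
by rewrite -(nth_take x0 (ltnSn t.+1)) -e nth_rcons size_Sk ltnn eqxx.
Qed.

Lemma nth0 : nth x0 s 0 = x0.
Proof. by rewrite -(nth_take x0 (ltnSn 0)) -(Sk_take F (leq0n n)). Qed.

Lemma step_pos (v : 'I_m) : 0 < step F (inr v).
Proof.
rewrite lt0n; apply/eqP => e.
by have := nth_step (inr v); rewrite e nth0.
Qed.

Lemma step_parent (v : 'I_m) : step F (F v) < step F (inr v).
Proof.
have hp := step_pos v; have hl := step_le (inr v).
have := nth_Sk (t := step F (inr v)); rewrite hp hl nth_step => /(_ isT).
rewrite /next_node -/(cand F _).
case E: (cand F _) => [|u l] // [eu].
have : v \in cand F (Sk F (step F (inr v)).-1) by rewrite E -eu mem_head.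
rewrite mem_filter /= !mem_Sk ?leq_pred //; try lia.
Qed.

Lemma step_between (v : 'I_m) q : step F (F v) < q < step F (inr v) ->
  exists2 u : 'I_m, u < v & step F (inr u) = q.
Proof.
move=> hq.
have hl := step_le (inr v).
have := nth_Sk (t := q); rewrite (_ : 0 < q <= n) ?andbT; last lia.
move=> /(_ isT); rewrite /next_node -/(cand F _).
have vin : v \in cand F (Sk F q.-1).
  rewrite mem_filter mem_enum andbT /= !mem_Sk; try lia.
case E: (cand F _) => [|u l]; first by rewrite E in vin.
move=> eq.
have uv : u <= v by apply: (head_filter_enum E); move: vin; rewrite mem_filter => /andP [].
have su : step F (inr u) = q by rewrite -eq step_nth //; lia.
exists u => //.
rewrite ltn_neqAle uv andbT; apply/eqP => /val_inj e.
by move: su hq; rewrite e => ->; lia.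
Qed.

End Forest.

Definition phi m n (hmn : m < n) (F : forestfun m n) : {ffun 'I_m -> 'I_n} :=
  [ffun v => insubd (widen_ord (ltnW hmn) v) (step F (F v))].

Definition stp m n (F : forestfun m n) (v : 'I_m) := step F (inr v).
Definition spp m n (F : forestfun m n) (v : 'I_m) := step F (F v).

Section Forest2.
Variables (m n : nat) (F : forestfun m n).
Hypotheses (hmn : m < n) (hF : is_forest F).

Local Notation st v := (stp F v).
Local Notation sp v := (spp F v).

Lemma st_le (v : 'I_m) : st v <= n.
Proof. exact: step_le. Qed.
Lemma st_pos (v : 'I_m) : 0 < st v.
Proof. exact: step_pos. Qed.
Lemma st_par (v : 'I_m) : sp v < st v.
Proof. exact: step_parent. Qed.
Lemma st_between (v : 'I_m) q : sp v < q < st v ->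
  exists2 u : 'I_m, u < v & st u = q.
Proof. exact: step_between. Qed.
Lemma st_inj0 (i j : 'I_m) : st i = st j -> i = j.
Proof. by move/(step_inj hmn hF) => []. Qed.

Lemma phiE v : val (phi hmn F v) = sp v.
Proof.
rewrite ffunE val_insubd.
have := st_par v; have := st_le v.
case: ifP => // h1 h2 h3; by move: h1; rewrite (leq_trans h3 h2).
Qed.

Lemma st_inj (i j : 'I_m) : (st i).-1 = (st j).-1 -> i = j.
Proof.
move=> e; have hi := st_pos i; have hj := st_pos j.
apply: st_inj0; lia.
Qed.

Lemma park_phi : park n (prefs (phi hmn F)) = Some [seq (st j).-1 | j <- enum 'I_m].
Proof.
apply/park_good; split; first by rewrite /prefs !size_map.
rewrite /prefs size_map size_enum_ord => i hi.
rewrite -[i]/(val (Ordinal hi)); set i' := Ordinal hi.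
rewrite (nth_map_enum (fun j => val (phi hmn F j))) (nth_map_enum (fun j => (st j).-1)) phiE.
have hp := st_par i'; have hl := st_le i'; have hpos := st_pos i'.
split.
- lia.
- rewrite mem_take_map_enum; apply/existsP => -[j /andP [hj /eqP e]].
  by move: hj; rewrite (st_inj e) ltnn.
- move=> s' hs; rewrite mem_take_map_enum.
  have [u hu su] := st_between (v := i') (q := s'.+1) ltac:(lia).
  by apply/existsP; exists u; rewrite hu su eqxx.
Qed.

Lemma is_pf_phi : is_pf (phi hmn F).
Proof. by rewrite /is_pf park_phi. Qed.

Lemma spots_phi : spots (phi hmn F) = [seq (st j).-1 | j <- enum 'I_m].
Proof. by rewrite /spots park_phi. Qed.

Lemma spot_phi v : spot (phi hmn F) v = (st v).-1.
Proof. by rewrite /spot spots_phi nth_map_enum. Qed.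

Lemma lucky_phi : lucky (phi hmn F) = psa F.
Proof.
rewrite /lucky /psa; apply: eq_card => i; rewrite !inE spot_phi phiE /=.
rewrite -/(stp F i) -/(spp F i).
have := st_pos i.
by move=> h; apply/eqP/eqP; lia.
Qed.

Lemma probes_phi : probes (phi hmn F) = wait F.
Proof.
rewrite /probes /wait; apply: eq_bigr => i _; rewrite spot_phi phiE /=.
rewrite -/(stp F i) -/(spp F i).
have := st_pos i; have := st_par i; lia.
Qed.

Lemma one_step (w u : 'I_m) : F w = inr u ->
  st u < st w /\ forall t, st u <= t < st w -> exists w', st w' = t.
Proof.
move=> e; have := st_par w; rewrite /spp e -/(stp F u) => h; split => // t ht.
case: (ltngtP (st u) t) => h'.
- have [w' _ <-] := st_between (v := w) (q := t) ltac:(rewrite /spp e -/(stp F u); lia).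
  by exists w'.
- lia.
- by exists u.
Qed.

Lemma anc k (v u : 'I_m) : 0 < k -> iter k (parent F) (inr v) = inr u ->
  st u < st v /\ forall t, st u <= t < st v -> exists w', st w' = t.
Proof.
elim: k u => // k IH u _.
rewrite iterS.
case: k IH => [|k] IH; first exact: one_step.
case E: (iter k.+1 (parent F) (inr v)) => [r|w] //= ew.
have [h1 h2] := IH w isT E.
have [h3 h4] := one_step ew.
split; first lia.
move=> t ht; case: (ltnP t (st w)) => h.
- by apply: h4; lia.
- by apply: h2; lia.
Qed.

Lemma index_spots (u : 'I_m) : index (st u).-1 [seq (st j).-1 | j <- enum 'I_m] = u.
Proof.
by rewrite (index_map (f := fun j : 'I_m => (st j).-1)) ?index_enum_ord // => i j /st_inj.
Qed.

Lemma rec_phi_v (v : 'I_m) : (v \in pf_rec (phi hmn F)) = (v \in forest_rec F).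
Proof.
rewrite !inE spot_phi spots_phi.
have hvpos := st_pos v; have hvl := st_le v.
apply/forallP/forallP.
- move=> H k; apply/implyP => hk.
  case E: (iter k (parent F) (inr v)) => [r|u] //.
  have [h1 h2] := anc hk E.
  have hupos := st_pos u.
  have ho : (st u).-1 < n by lia.
  have := H (Ordinal ho) => /=.
  rewrite index_spots => /implyP; apply; apply/andP; split; first by lia.
  apply/allP => s'; rewrite mem_iota => hs.
  have [w hw] := h2 s'.+1 ltac:(lia).
  apply/mapP; exists w; [exact: mem_enum | lia].
- move=> H.
  have Hk : forall k, 0 < k -> k <= m -> forall u, iter k (parent F) (inr v) = inr u -> u < v.
    move=> k hk hkm u e.
    have := H (Ordinal (n:=m.+1) (m:=k) ltac:(lia)); rewrite /= hk /= e; exact.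
  have desc : forall k, k <= m ->
     step F (iter k (parent F) (inr v)) <= st v /\
     forall q, step F (iter k (parent F) (inr v)) < q < st v ->
        exists2 w : 'I_m, st w = q & w < v.
    elim=> [_|k IH hk].
      by split => // q /andP [a b]; have := ltn_trans a b; rewrite /= ltnn.
    have [i1 i2] := IH (ltnW hk).
    rewrite iterS.
    case E: (iter k (parent F) (inr v)) => [r|w] /=; first by rewrite -E.
    rewrite E -/(stp F w) in i1 i2.
    have wv : w <= v.
      case: k {IH} hk E i1 i2 => [_ [] -> //|k] hk E _ _.
      exact/ltnW/(Hk k.+1 isT (ltnW hk) w E).
    have hp := st_par w.
    rewrite -/(spp F w).
    split; first lia.
    move=> q hq; case: (ltngtP q (st w)) => h.
    + have [u hu su] := st_between (v := w) (q := q) ltac:(lia).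
      by exists u => //; apply: leq_trans hu wv.
    + by apply: i2; lia.
    + exists w => //.
      move: E; case: k {IH} hk i1 i2 => [_ _ _ /= [ew]|k hk _ _ E].
        by move: h hq; rewrite -ew; lia.
      exact: (Hk k.+1 isT (ltnW hk) w E).
  move=> t; apply/implyP => /andP [ht /allP hall].
  have := hall t; rewrite mem_iota leqnn /= => /(_ ltac:(lia)) /mapP [u _ tu].
  rewrite tu index_spots.
  have [d1 d2] := desc m (leqnn m).
  have hroot := forallP hF v.
  set x := iter m (parent F) (inr v) in d1 d2 hroot.
  have hupos := st_pos u.
  have rlt : step F x < st u.
    rewrite ltnNge; apply/negP => hle.
    have rne : step F x != st v.
      apply/negP => /eqP /(step_inj hmn hF) ex.
      by rewrite ex in hroot.
    have := hall (step F x).-1; rewrite mem_iota => /(_ ltac:(lia)) /mapP [w _ ew].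
    have : step F x = st w.
      have := st_pos w; lia.
    move/(step_inj hmn hF) => ex; by rewrite ex in hroot.
  have [w sw wv] := d2 (st u) ltac:(lia).
  by move: sw => /st_inj0 <-.
Qed.

Lemma rec_phi : pf_rec (phi hmn F) = forest_rec F.
Proof. by apply/setP => v; exact: rec_phi_v. Qed.

End Forest2.

Lemma phi_inj m n (hmn : m < n) (F1 F2 : forestfun m n) : is_forest F1 -> is_forest F2 ->
  phi hmn F1 = phi hmn F2 -> F1 = F2.
Proof.
move=> h1 h2 e.
have est : forall v : 'I_m, step F1 (inr v) = step F2 (inr v).
  move=> v.
  have := congr1 (fun p => spot p v) e; rewrite !spot_phi //.
  have := st_pos hmn h1 v; have := st_pos hmn h2 v; rewrite /stp; lia.
have tk : forall t, t <= n -> take t.+1 (search F1) = take t.+1 (search F2).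
  elim=> [_|t IH ht].
    by rewrite -!Sk_take.
  rewrite (take_nth (inl ord0) (s := search F1)) ?size_search // (take_nth (inl ord0) (s := search F2)) ?size_search // IH ?(ltnW ht) //; congr rcons.
  case E1: (nth (inl ord0) (search F1) t.+1) => [r1|u1].
    case E2: (nth (inl ord0) (search F2) t.+1) => [r2|u2].
      move: E1 E2; rewrite !nth_Sk // !Sk_take //; try lia.
      rewrite /= IH ?(ltnW ht) // /next_node.
      by case: (filter _ _) => [|? ?] // [<-]; case: (filter _ _) => [|? ?] // [<-].
    have := step_nth hmn h2 ht; rewrite E2 -est => /esym.
    by rewrite -(step_nth hmn h1 ht) E1 => /(step_inj hmn h1).
  have := step_nth hmn h1 ht; rewrite E1 est => <-.
  by rewrite nth_step.
have es : search F1 = search F2.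
  by rewrite -(take_size (search F1)) -(take_size (search F2)) !size_search // tk.
apply/ffunP => v.
have := congr1 (fun p : {ffun 'I_m -> 'I_n} => val (p v)) e; rewrite /= !phiE // /spp.
rewrite /step es; exact: (step_inj hmn h2).
Qed.

Section PF2.
Variables (m n : nat) (pi : {ffun 'I_m -> 'I_n}).
Hypotheses (hmn : m < n) (hpf : is_pf pi).

Local Notation sp := (spot pi).
Local Notation x0 := (inl ord0 : node m n).

Definition cnt s := count (fun t => t \notin spots pi) (iota 0 s.+1).

Definition tnode s : node m n :=
  match [pick i | sp i == s] with Some i => inr i | None => inl (inord (cnt s)) end.

Definition T := x0 :: map tnode (iota 0 n).

Definition Psi : forestfun m n := [ffun v => nth x0 T (pi v)].

Lemma mem_spots s : (s \in spots pi) = [exists i, sp i == s].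
Proof.
rewrite (spotsE hpf); apply/mapP/existsP => [[i _ ->]|[i /eqP <-]].
  by exists i.
by exists i; rewrite ?mem_enum.
Qed.

Lemma tnode_spot i : tnode (sp i) = inr i.
Proof.
rewrite /tnode; case: pickP => [j /eqP /(spot_inj hpf) -> //|].
by move/(_ i); rewrite eqxx.
Qed.

Lemma tnode_free s : s \notin spots pi -> tnode s = inl (inord (cnt s)).
Proof.
rewrite /tnode mem_spots negb_exists => /forallP h.
by case: pickP => // j hj; move: (h j); rewrite hj.
Qed.

Lemma is_root_tnode s : is_root (tnode s) = (s \notin spots pi).
Proof.
case: (boolP (s \in spots pi)) => h; last by rewrite tnode_free.
by move: h; rewrite mem_spots => /existsP [i /eqP <-]; rewrite tnode_spot.
Qed.

Lemma size_T : size T = n.+1.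
Proof. by rewrite /= size_map size_iota. Qed.

Lemma nth_T s : s < n -> nth x0 T s.+1 = tnode s.
Proof. by move=> h; rewrite /= (nth_map 0) ?size_iota // nth_iota. Qed.

Lemma count_spots : count (fun t => t \in spots pi) (iota 0 n) = m.
Proof.
rewrite -size_filter -{2}(size_spots hpf); apply: perm_size.
apply: uniq_perm; first exact/filter_uniq/iota_uniq.
  rewrite (spotsE hpf) map_inj_uniq ?enum_uniq //; exact: spot_inj.
move=> t; rewrite mem_filter mem_iota /= andb_idr // => ht.
move: ht; rewrite mem_spots => /existsP [i /eqP <-].
by have [/andP [_ h] _ _] := spot_facts hpf i.
Qed.

Lemma cnt_split s d : cnt (s + d) = cnt s + count (fun t => t \notin spots pi) (iota s.+1 d).
Proof. by rewrite /cnt -addSn iotaD count_cat. Qed.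

Lemma cnt_le s : s < n -> cnt s <= n - m.
Proof.
move=> h.
have e : cnt (n.-1) = n - m.
  rewrite /cnt prednK; last lia.
  have h2 := count_predC (fun t => t \in spots pi) (iota 0 n).
  rewrite count_spots size_iota in h2.
  rewrite (eq_count (a2 := predC (fun t => t \in spots pi))) //; lia.
rewrite -e -(subnK (_ : s <= n.-1)); last lia.
rewrite addnC cnt_split; exact: leq_addr.
Qed.

Lemma cnt_pos s : s \notin spots pi -> 0 < cnt s.
Proof.
move=> h; rewrite /cnt -[s.+1]addn1 iotaD count_cat /= h; lia.
Qed.

Lemma cnt_lt s s' : s < s' -> s' \notin spots pi -> cnt s < cnt s'.
Proof.
move=> h hs'.
have e : s' = s + (s' - s) by lia.
rewrite [in cnt s']e cnt_split -{1}[cnt s]addn0 ltn_add2l -has_count.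
by apply/hasP; exists s' => //; rewrite mem_iota; lia.
Qed.

Lemma inord_cnt s : s < n -> (inord (cnt s) : 'I_(n - m).+1) = cnt s :> nat.
Proof. by move=> h; rewrite inordK // ltnS cnt_le. Qed.

Lemma uniq_T : uniq T.
Proof.
rewrite /= map_inj_in_uniq ?iota_uniq ?andbT.
  apply/mapP => -[s]; rewrite mem_iota => /andP [_ hs] /esym.
  case: (boolP (s \in spots pi)) => h.
    by move: h; rewrite mem_spots => /existsP [i /eqP <-]; rewrite tnode_spot.
  rewrite tnode_free // => -[] /(congr1 val) /=; rewrite inord_cnt //.
  have := cnt_pos h; lia.
move=> s s'; rewrite !mem_iota /= => hs hs'.
case: (boolP (s \in spots pi)) => h.
  move: h; rewrite mem_spots => /existsP [i /eqP <-]; rewrite tnode_spot.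
  case: (boolP (s' \in spots pi)) => h'.
    by move: h'; rewrite mem_spots => /existsP [j /eqP <-]; rewrite tnode_spot => -[->].
  by rewrite tnode_free.
rewrite tnode_free //.
case: (boolP (s' \in spots pi)) => h'.
  by move: h'; rewrite mem_spots => /existsP [j /eqP <-]; rewrite tnode_spot.
rewrite tnode_free // => -[] /(congr1 val) /=; rewrite !inord_cnt //; try lia.
case: (ltngtP s s') => // hlt.
- by have := cnt_lt hlt h'; lia.
- by have := cnt_lt hlt h; lia.
Qed.

Lemma index_nth_T t : t <= n -> index (nth x0 T t) T = t.
Proof. by move=> h; rewrite index_uniq ?size_T ?uniq_T. Qed.

Lemma index_inr_T (v : 'I_m) : index (inr v) T = (sp v).+1.
Proof.
have [/andP [_ h] _ _] := spot_facts hpf v.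
by rewrite -tnode_spot -nth_T // index_nth_T.
Qed.

Lemma mem_inr_T (v : 'I_m) : inr v \in T.
Proof. by rewrite -index_mem index_inr_T size_T; have [/andP [_ h] _ _] := spot_facts hpf v. Qed.

Lemma Psi_index (v : 'I_m) : index (Psi v) T = pi v.
Proof. by rewrite ffunE index_nth_T // ltnW. Qed.

Lemma mem_Psi_T (v : 'I_m) : Psi v \in T.
Proof. by rewrite -index_mem Psi_index size_T ltnW // ltnS ltn_ord. Qed.

Lemma search_Psi_k k : k <= n -> Sk Psi k = take k.+1 T.
Proof.
elim: k => [|k IH hk]; first by rewrite /= take0.
rewrite Sk_S IH ?(ltnW hk) // [take k.+2 T](take_nth x0) ?size_T //; congr rcons.
rewrite nth_T //.
have memk : forall x, x \in T -> (x \in take k.+1 T) = (index x T < k.+1).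
  by move=> x hx; rewrite in_take.
have candE : cand Psi (take k.+1 T) =
    [seq v <- enum 'I_m | (k <= sp v) && (pi v <= k)].
  apply: eq_filter => v /=.
  by rewrite !memk ?mem_inr_T ?mem_Psi_T // index_inr_T Psi_index ltnS ltnNge negbK.
rewrite /next_node -/(cand Psi _) candE.
case: (boolP (k \in spots pi)) => hk'.
  move: hk'; rewrite mem_spots => /existsP [i /eqP ei].
  have -> : tnode k = inr i by rewrite -ei tnode_spot.
  have [hi1 _ _] := spot_facts hpf i.
  have iin : (k <= sp i) && (pi i <= k) by rewrite ei leqnn -ei; case/andP: hi1.
  case E: (filter _ _) => [|u l].
    by have : i \in [::] by rewrite -E mem_filter mem_enum iin.
  have ui := head_filter_enum E iin.
  have : u \in filter (fun v => (k <= sp v) && (pi v <= k)) (enum 'I_m) by rewrite E mem_head.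
  rewrite mem_filter => /andP [/andP [h1 h2] _].
  case: (ltngtP k (sp u)) => h3; last by rewrite -ei in h3; rewrite (spot_inj hpf h3).
  - have [_ _ H3] := spot_facts hpf u.
    have [j hj ej] := H3 k ltac:(lia).
    move: ej; rewrite -ei => /(spot_inj hpf) ej.
    by move: hj ui; rewrite ej; lia.
  - lia.
rewrite tnode_free //.
case E: (filter _ _) => [|u l].
  congr inl; congr inord.
  rewrite /cnt -[k.+1]addn1 iotaD count_cat /= hk'.
  rewrite addn1 /T take_cons -map_take take_iota /= count_map (_ : minn k n = k); last lia.
  rewrite add1n addn1; congr S; apply: eq_count => t /=.
  exact: is_root_tnode.
have : u \in filter (fun v => (k <= sp v) && (pi v <= k)) (enum 'I_m) by rewrite E mem_head.
rewrite mem_filter => /andP [/andP [h1 h2] _].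
case: (ltngtP k (sp u)) => h3.
- have [_ _ H3] := spot_facts hpf u.
  have [j hj ej] := H3 k ltac:(lia).
  by move: hk'; rewrite mem_spots; case/existsP; exists j; rewrite ej.
- lia.
- by move: hk'; rewrite mem_spots; case/existsP; exists u; rewrite h3.
Qed.

Lemma search_Psi : search Psi = T.
Proof. by rewrite /search -/(Sk Psi n) search_Psi_k // take_oversize // size_T. Qed.

Definition rk (u : 'I_m) := #|[set w | sp w < sp u]|.

Lemma rk_lt u v : sp u < sp v -> rk u < rk v.
Proof.
move=> h; apply: proper_card; apply/properP; split.
  by apply/subsetP => w; rewrite !inE => h'; apply: ltn_trans h' h.
by exists u; rewrite !inE ?ltnn.
Qed.

Lemma rk_max v : rk v < m.
Proof.
rewrite -[m]card_ord -cardsT; apply: proper_card; rewrite properT.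
by apply/eqP => e; have := in_setT v; rewrite -e inE ltnn.
Qed.

Lemma Psi_par (v u : 'I_m) : Psi v = inr u -> sp u < sp v.
Proof.
move=> e; have := Psi_index v; rewrite e index_inr_T => h.
have [/andP [h1 _] _ _] := spot_facts hpf v; lia.
Qed.

Lemma is_forest_Psi : is_forest Psi.
Proof.
have key : forall k (v u : 'I_m), iter k (parent Psi) (inr v) = inr u -> rk u + k <= rk v.
  elim=> [v u [->]|k IH v u]; first by rewrite addn0.
  rewrite iterS; case E: (iter k (parent Psi) (inr v)) => [r|w] //= ew.
  have := IH _ _ E; have := rk_lt (Psi_par ew); lia.
apply/forallP => v.
case E: (iter m (parent Psi) (inr v)) => [r|u] //.
have := key _ _ _ E; have := rk_max v; lia.
Qed.

Lemma phi_Psi : phi hmn Psi = pi.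
Proof.
apply/ffunP => v; apply: val_inj.
rewrite (phiE hmn is_forest_Psi) /spp /step search_Psi.
exact: Psi_index.
Qed.

End PF2.

Theorem main (m n : nat) (hmn : m < n) (R : {set 'I_m}) (a b : nat) :
  #|[set F : forestfun m n | [&& is_forest F, forest_rec F == R,
                                 psa F == a & wait F == b]]|
  = #|[set pi : {ffun 'I_m -> 'I_n} | [&& is_pf pi, pf_rec pi == R,
                                          lucky pi == a & probes pi == b]]|.
Proof.
set A := [set F : forestfun m n | _].
set B := [set pi : {ffun 'I_m -> 'I_n} | _].
have <- : phi hmn @: A = B.
  apply/setP => pi; apply/imsetP/idP.
    case=> F; rewrite !inE => /and4P [hF /eqP hR /eqP ha /eqP hb] ->.
    by rewrite is_pf_phi // rec_phi // lucky_phi // probes_phi // hR ha hb !eqxx.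
  rewrite inE => /and4P [hpf /eqP hR /eqP ha /eqP hb].
  exists (Psi pi); last by rewrite phi_Psi.
  have hF := is_forest_Psi hmn hpf.
  rewrite inE hF -(rec_phi hmn hF) -(lucky_phi hmn hF) -(probes_phi hmn hF).
  by rewrite phi_Psi // hR ha hb !eqxx.
rewrite card_in_imset // => F1 F2; rewrite !inE => /andP [h1 _] /andP [h2 _].
exact: phi_inj.
Qed.

Theorem theorem4p6 (m n : nat) (hmn : m < n) (R : {set 'I_m}) (a b : nat) :
  #|[set F : forestfun m n | [&& is_forest F, forest_rec F == R,
                                 psa F == a & wait F == b]]|
  = #|[set pi : {ffun 'I_m -> 'I_n} | [&& is_pf pi, pf_rec pi == R,
                                          lucky pi == a & probes pi == b]]|.
Proof. exact: main. Qed.
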